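(* Let $\pi_\bullet\in\mathrm{Dr}(k,n)$. For every $I\in\binom{[n]}k$, $$\pi_I=-\min_{\mathbf y\in\mathrm{Vert}(B(\pi_\bullet))}\sum_{i\in I}-\tilde y_i,$$ where for a vertex $\mathbf y$ of $B(\pi_\bullet)$, $\tilde{\mathbf y}=(\tilde y_1,\dots,\tilde y_n)\in\mathbb R^n$ is its lift.
   Context: $\mathrm{Dr}(k,n)$ is the set of $\pi_\bullet\in\mathbb R^{\binom{[n]}k}$ such that for every $S\in\binom{[n]}{k-2}$ and $a<b<c<d$ in $[n]\setminus S$, $\min(\pi_{Sab}+\pi_{Scd},\pi_{Sac}+\pi_{Sbd},\pi_{Sad}+\pi_{Sbc})$ is attained at least twice. For $\mathbf x\in\mathbb R^n$, $\pi^{\mathbf x}_I=\pi_I-\sum_{i\in I}x_i$, and $M(\pi^{\mathbf x}_\bullet)=\{I:\pi^{\mathbf x}_I=\min_J\pi^{\mathbf x}_J\}$ (a matroid). The tropical linear space $L(\pi_\bullet)\subset\mathbb R^n/\mathbf 1$ is the set of $\mathbf x$ such that for each $\tau\in\binom{[n]}{k+1}$, $\min_{i\in\tau}(\pi_{\tau\setminus i}+x_i)$ is attained at least twice. Its matroid complex structure is the stratification into faces on which $M(\pi^{\mathbf x}_\bullet)$ is constant; $B(\pi_\bullet)$ is the subcomplex of bounded faces and $\mathrm{Vert}(B(\pi_\bullet))$ its vertices. For $\mathbf y\in L(\pi_\bullet)$ its lift $\tilde{\mathbf y}\in\mathbb R^n$ is the representative with $\min_I\pi^{\tilde{\mathbf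 y}}_I=0$. *)

(* Defs.v *)
From HB Require Import structures.
From mathcomp Require Import all_boot all_order all_algebra.
From mathcomp Require Import reals.

Set Implicit Arguments.
Unset Strict Implicit.
Unset Printing Implicit Defensive.

Import Order.TTheory GRing.Theory Num.Theory.
Local Open Scope ring_scope.

Section Defs.
Variable R : realType.
Variables (k n : nat).

Definition min3_twice (p q r : R) : Prop :=
  (p = q /\ p <= r) \/ (p = r /\ p <= q) \/ (q = r /\ q <= p).

(* Dr(k,n): pi is indexed by subsets of [n] = 'I_n; only k-subsets matter. *)
Definition Dressian (pi : {set 'I_n} -> R) : Prop :=
  forall (S : {set 'I_n}) (a b c d : 'I_n),
    (#|S| + 2)%N = k ->
    a \notin S -> b \notin S -> c \notin S -> d \notin S ->
    (a < b)%N -> (b < c)%N -> (c < d)%N ->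
    min3_twice (pi (a |: (b |: S)) + pi (c |: (d |: S)))
               (pi (a |: (c |: S)) + pi (b |: (d |: S)))
               (pi (a |: (d |: S)) + pi (b |: (c |: S))).

Definition min_twice (A : {set 'I_n}) (f : 'I_n -> R) : Prop :=
  exists i j, [/\ i \in A, j \in A, i != j,
    (forall l, l \in A -> f i <= f l) & (forall l, l \in A -> f j <= f l)].

(* x (a representative in R^n of a point of R^n/1) lies in L(pi) *)
Definition inL (pi : {set 'I_n} -> R) (x : 'I_n -> R) : Prop :=
  forall tau : {set 'I_n}, #|tau| = k.+1 ->
    min_twice tau (fun i => pi (tau :\ i) + x i).

Definition piX (pi : {set 'I_n} -> R) (x : 'I_n -> R) (I : {set 'I_n}) : R :=
  pi I - \sum_(i in I) x i.

Definition Mat (pi : {set 'I_n} -> R) (x : 'I_n -> R) : {set {set 'I_n}} :=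
  [set I : {set 'I_n} | (#|I| == k) &&
     [forall J : {set 'I_n}, (#|J| == k) ==> (piX pi x I <= piX pi x J)]].

(* the (relatively open) face of the matroid complex structure of L(pi)
   containing x: points of L(pi) with the same matroid M(pi^z) *)
Definition face (pi : {set 'I_n} -> R) (x : 'I_n -> R) : ('I_n -> R) -> Prop :=
  fun z => inL pi z /\ Mat pi z = Mat pi x.

Definition bounded_mod1 (F : ('I_n -> R) -> Prop) : Prop :=
  exists C : R, forall z, F z -> forall i j, `|z i - z j| <= C.

(* F is the single point y in R^n/1 (together with F y) *)
Definition point_mod1 (F : ('I_n -> R) -> Prop) (y : 'I_n -> R) : Prop :=
  forall z, F z -> exists t : R, forall i, z i = y i + t.

(* y (representative) is a vertex of the bounded complex B(pi):
   its face is a bounded, 0-dimensional face of L(pi) *)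
Definition is_vertex_B (pi : {set 'I_n} -> R) (y : 'I_n -> R) : Prop :=
  [/\ inL pi y, bounded_mod1 (face pi y) & point_mod1 (face pi y) y].

Definition is_lift (pi : {set 'I_n} -> R) (y yt : 'I_n -> R) : Prop :=
  [/\ exists t : R, forall i, yt i = y i + t,
      exists J : {set 'I_n}, #|J| = k /\ piX pi yt J = 0 &
      forall J : {set 'I_n}, #|J| = k -> 0 <= piX pi yt J].

Definition is_min (P : R -> Prop) (m : R) : Prop :=
  P m /\ forall v, P v -> m <= v.

End Defs.

(* Main.v *)
Require Import Defs.
From HB Require Import structures.
From mathcomp Require Import all_boot all_order all_algebra.
From mathcomp Require Import reals.
From mathcomp Require Import lra zify ring.
From Stdlib Require Import Classical.
Import Order.TTheory GRing.Theory Num.Theory.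
Local Open Scope ring_scope.

Set Implicit Arguments.
Unset Strict Implicit.
Unset Printing Implicit Defensive.


Section Aux.
Variable R : realType.
Variables k n : nat.

Lemma argmin_ex (T : finType) (P : pred T) (f : T -> R) x :
  P x -> exists b, P b /\ forall t, P t -> f b <= f t.
Proof.
move=> Px; case: (arg_minP f Px) => b Pb Hb; exists b; split => //.
Qed.

Definition X3 (w : {set 'I_n} -> R) S (a b c d : 'I_n) :=
  w (a |: (b |: S)) + w (c |: (d |: S)).

Definition G3 w S a b c d :=
  X3 w S a c b d <= X3 w S a b c d \/ X3 w S a d b c <= X3 w S a b c d.

Definition Sym3 (w : {set 'I_n} -> R) := forall (S : {set 'I_n}) (a b c d : 'I_n),
  (#|S| + 2)%N = k -> a \notin S -> b \notin S -> c \notin S -> d \notin S ->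
  a != b -> a != c -> a != d -> b != c -> b != d -> c != d -> G3 w S a b c d.

Lemma pairC (S : {set 'I_n}) a b : a |: (b |: S) = b |: (a |: S).
Proof. by rewrite setUCA. Qed.

Lemma min3_ge (p q r : R) : min3_twice p q r ->
  [/\ q <= p \/ r <= p, p <= q \/ r <= q & p <= r \/ q <= r].
Proof.
case=> [[e h]|[[e h]|[e h]]]; subst.
- by split; [left|left|left].
- by split; [right|right|left].
- split; [left|right|right] => //; lra.
Qed.

Lemma G3_swap1 w S a b c d : G3 w S b a c d -> G3 w S a b c d.
Proof.
rewrite /G3 /X3 (pairC S b a) => -[h|h].
- by right; lra.
- by left; lra.
Qed.

Lemma G3_swap2 w S a b c d : G3 w S a b d c -> G3 w S a b c d.
Proof.
rewrite /G3 /X3 (pairC S d c) => -[h|h].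
- by right; lra.
- by left; lra.
Qed.

Lemma G3_swap3 w S a b c d : G3 w S c d a b -> G3 w S a b c d.
Proof.
rewrite /G3 /X3 (pairC S c a) (pairC S d b) (pairC S c b) (pairC S d a) => -[h|h].
- by left; lra.
- by right; lra.
Qed.

Lemma ord_neq_lt (a b : 'I_n) : a != b -> (a < b)%N \/ (b < a)%N.
Proof.
move=> h; case: (ltngtP a b) => [l|l|e]; [by left|by right|].
by move: h; rewrite (val_inj e) eqxx.
Qed.

Section DS.
Variables (w : {set 'I_n} -> R) (D : Dressian k w) (S : {set 'I_n}) (HS : (#|S| + 2)%N = k).

Lemma DS_sorted a b c d : a \notin S -> b \notin S -> c \notin S -> d \notin S ->
  (a < b)%N -> (c < d)%N -> (a < c)%N -> b != c -> b != d -> G3 w S a b c d.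
Proof.
move=> na nb nc nd ab cd ac bc bd.
case: (ord_neq_lt bc) => bc'.
- have := D HS na nb nc nd ab bc' cd.
  by move/min3_ge=> [h _ _]; rewrite /G3 /X3.
case: (ord_neq_lt bd) => bd'.
- have := D HS na nc nb nd ac bc' bd'.
  move/min3_ge=> [_ h _]; rewrite /G3 /X3; rewrite (pairC S c b) in h.
  by case: h => h; [left|right].
- have := D HS na nc nd nb ac cd bd'.
  move/min3_ge=> [_ _ h]; rewrite /G3 /X3; rewrite (pairC S d b) (pairC S c b) in h.
  by case: h => h; [left|right].
Qed.

Lemma DS_2 a b c d : a \notin S -> b \notin S -> c \notin S -> d \notin S ->
  a != c -> a != d -> b != c -> b != d -> c != d -> (a < b)%N -> (c < d)%N -> G3 w S a b c d.
Proof.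
move=> na nb nc nd ac ad bc bd cd ab cd'.
case: (ord_neq_lt ac) => ac'.
- exact: DS_sorted.
- apply: G3_swap3; apply: DS_sorted => //; by rewrite eq_sym.
Qed.

Lemma DS_1 a b c d : a \notin S -> b \notin S -> c \notin S -> d \notin S ->
  a != c -> a != d -> b != c -> b != d -> c != d -> (a < b)%N -> G3 w S a b c d.
Proof.
move=> na nb nc nd ac ad bc bd cd ab.
case: (ord_neq_lt cd) => cd'.
- exact: DS_2.
- apply: G3_swap2; apply: DS_2 => //; by rewrite eq_sym.
Qed.

End DS.

Lemma Dressian_Sym3 (w : {set 'I_n} -> R) : Dressian k w -> Sym3 w.
Proof.
move=> D S a b c d HS na nb nc nd ab ac ad bc bd cd.
case: (ord_neq_lt ab) => ab'.
- exact: DS_1.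
- apply: G3_swap1; apply: DS_1 => //; by rewrite eq_sym.
Qed.


Lemma GP (w : {set 'I_n} -> R) : Sym3 w -> forall m (S T : {set 'I_n}),
  #|T :\: S| = m -> (#|S|.+1 = k)%N -> #|T| = k.+1 ->
  forall a, a \in T :\: S -> exists2 t, t \in T :\: S &
    (t != a) /\ w (t |: S) + w (T :\ t) <= w (a |: S) + w (T :\ a).
Proof.
move=> Hw m; elim/ltn_ind: m => m IH S T Hm HS HT a Ha.
have cge2 : (2 <= #|T :\: S|)%N.
  rewrite cardsD; have := subset_leq_card (subsetIr T S); lia.
have [b [/andP [bE ba] _]] : exists b, ((b \in T :\: S) && (b != a)) /\ True.
  have : (0 < #|(T :\: S) :\ a|)%N by move: cge2; rewrite (cardsD1 a) Ha; lia.
  case/card_gt0P => b /setD1P [ba bE]; exists b; by rewrite bE ba.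
case: (boolP (S \subset T)) => sub.
- have c2 : #|T :\: S| = 2.
    rewrite cardsD (setIidPr sub); lia.
  have E : T :\: S = [set a; b].
    apply/eqP; rewrite eq_sym eqEcard; apply/andP; split.
    + by apply/subsetP => x; rewrite in_set2 => /orP [/eqP->|/eqP->].
    + by rewrite cards2 eq_sym ba c2.
  have memT : forall x, (x \in T) = (x \in S) || (x == a) || (x == b).
    move=> x; have h : (x \in T :\: S) = (x \in [set a; b]) by rewrite E.
    rewrite in_set2 inE in h.
    case xS: (x \in S) => /=; first by rewrite (subsetP sub x xS).
    by rewrite -h xS.
  have aS : a \notin S by move: Ha; rewrite inE => /andP [].
  have bS : b \notin S by move: bE; rewrite inE => /andP [].
  have Tb : T :\ b = a |: S.
    apply/setP => x; rewrite !inE memT.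
    case: (x =P b) => [->|xb] /=; first by rewrite (negbTE ba) (negbTE bS).
    by rewrite orbF orbC.
  have Ta : T :\ a = b |: S.
    apply/setP => x; rewrite !inE memT.
    case: (x =P a) => [->|xa] /=; first by rewrite eq_sym (negbTE ba) (negbTE aS).
    case: (x =P b) => [->|xb] /=; first by rewrite orbT.
    by rewrite !orbF.
  exists b => //; split => //; rewrite Ta Tb; lra.
case/subsetPn: sub => s sS sT.
set S0 := S :\ s.
have eS : forall x, s |: (x |: S0) = x |: S by move=> x; rewrite setUCA setD1K.
apply: NNPP => Hn.
have Hlt : forall t, t \in T :\: S -> t != a ->
    w (a |: S) + w (T :\ a) < w (t |: S) + w (T :\ t).
  move=> t tE ta; rewrite ltNge; apply/negP => h; apply: Hn; by exists t.
have [b' [/andP [b'E b'a] Hb']] := @argmin_ex _ (fun t => (t \in T :\: S) && (t != a))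
  (fun t => w (a |: (t |: S0)) + w (T :\ t)) b (introT andP (conj bE ba)).
clear b bE ba.
have aS : a \notin S by move: Ha; rewrite inE => /andP [].
have aT : a \in T by move: Ha; rewrite inE => /andP [].
have b'S : b' \notin S by move: b'E; rewrite inE => /andP [].
have b'T : b' \in T by move: b'E; rewrite inE => /andP [].
have notS0 : forall x, x \notin S -> x \notin S0.
  by move=> x xS; rewrite !inE negb_and xS orbT.
have cS0 : #|S| = (#|S0|.+1)%N by rewrite (cardsD1 s S) sS.
have E' : T :\: (b' |: S0) = (T :\: S) :\ b'.
  apply/setP => x; rewrite !inE.
  case: (x =P s) => [->|xs] /=; first by rewrite (negbTE sT) !andbF.
  by rewrite negb_or andbA.
have [t tE' [ta Ht]] : exists2 t, t \in T :\: (b' |: S0) &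
    (t != a) /\ w (t |: (b' |: S0)) + w (T :\ t) <= w (a |: (b' |: S0)) + w (T :\ a).
  apply: (IH #|T :\: (b' |: S0)|) => //.
  - rewrite E' -Hm (cardsD1 b' (T :\: S)) b'E; lia.
  - rewrite cardsU1 (notS0 _ b'S); lia.
  - rewrite !inE aT andbT; rewrite negb_or; apply/andP; split; first by rewrite eq_sym.
    by rewrite negb_and (negbTE aS) orbT.
move: tE'; rewrite E' => /setD1P [tb' tE].
have tS : t \notin S by move: tE; rewrite inE => /andP [].
have tT : t \in T by move: tE; rewrite inE => /andP [].
have h1 := Hlt t tE ta.
have h2 := Hlt b' b'E b'a.
have h3 := Hb' t (introT andP (conj tE ta)).
have ne : forall x, x \in T -> s != x.
  by move=> x xT; apply/eqP => e; move: sT; rewrite e xT.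
have := Hw S0 s a b' t.
rewrite /G3 /X3 !eS.
have H0 : (#|S0| + 2)%N = k by rewrite -HS cS0 addn2.
move=> /(_ H0 (negbT (setD11 s S)) (notS0 _ aS) (notS0 _ b'S) (notS0 _ tS)
  (ne _ aT) (ne _ b'T) (ne _ tT)).
rewrite eq_sym b'a eq_sym ta eq_sym tb' => /(_ isT isT isT).
rewrite (pairC S0 b' t) => -[h|h]; clear -h h1 h2 h3 Ht; lra.
Qed.

End Aux.



Section Aux2.
Variable R : realType.
Variables k n : nat.

Lemma sumU1 (y : 'I_n -> R) (a : 'I_n) (A : {set 'I_n}) : a \notin A ->
  \sum_(i in a |: A) y i = y a + \sum_(i in A) y i.
Proof. exact: big_setU1. Qed.

Lemma sumD1 (y : 'I_n -> R) (a : 'I_n) (A : {set 'I_n}) : a \in A ->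
  \sum_(i in A) y i = y a + \sum_(i in A :\ a) y i.
Proof. exact: big_setD1. Qed.

Lemma sum2 (y : 'I_n -> R) (a b : 'I_n) (S : {set 'I_n}) : a \notin S -> b \notin S -> a != b ->
  \sum_(i in a |: (b |: S)) y i = y a + (y b + \sum_(i in S) y i).
Proof.
move=> aS bS ab; rewrite sumU1; last by rewrite !inE negb_or ab aS.
by rewrite sumU1.
Qed.

Lemma Sym3_shift (w : {set 'I_n} -> R) (y : 'I_n -> R) :
  Sym3 k w -> Sym3 k (fun J => w J - \sum_(i in J) y i).
Proof.
move=> Hw S a b c d HS na nb nc nd ab ac ad bc bd cd.
have := Hw S a b c d HS na nb nc nd ab ac ad bc bd cd.
rewrite /G3 /X3 !sum2 //.
move=> [h|h]; [left|right]; lra.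
Qed.

Lemma setD1U1 (x z : 'I_n) (A : {set 'I_n}) : x != z -> (x |: A) :\ z = x |: (A :\ z).
Proof.
move=> xz; apply/setP => u; rewrite !inE.
case: (u =P x) => [->|ux] /=; first by rewrite xz.
by [].
Qed.

Lemma loc_glob (w : {set 'I_n} -> R) : Sym3 k w -> forall I : {set 'I_n}, #|I| = k ->
  (forall i j, i \in I -> j \notin I -> w I <= w (j |: (I :\ i))) ->
  forall J : {set 'I_n}, #|J| = k -> w I <= w J.
Proof.
move=> Hw I HI Hloc J; move: {2}#|J :\: I| (erefl #|J :\: I|) => d.
elim/ltn_ind: d J => d IH J Hd HJ.
case: (posnP d) => [d0|dpos].
- have : J :\: I = set0 by apply: cards0_eq; rewrite Hd d0.
  move/eqP; rewrite setD_eq0 => sub.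
  have : J == I by rewrite eqEcard sub HI HJ leqnn.
  by move/eqP ->.
have [j jE] : exists j, j \in J :\: I by apply/card_gt0P; rewrite Hd.
have jI : j \notin I by move: jE; rewrite inE => /andP [].
have jJ : j \in J by move: jE; rewrite inE => /andP [].
rewrite leNgt; apply/negP => HJI.
have HS : (#|J :\ j|.+1 = k)%N by move: HJ; rewrite (cardsD1 j J) jJ.
have HT : #|j |: I| = k.+1 by rewrite cardsU1 jI HI.
have Ha : j \in (j |: I) :\: (J :\ j) by rewrite !inE eqxx.
have [t tE [tj Ht]] := GP Hw (erefl _) HS HT Ha.
rewrite setD1K // setU1K // in Ht.
have tI : t \in I by move: tE; rewrite !inE (negbTE tj) /= => /andP [].
have tJ : t \notin J.
  by move: tE; rewrite !inE (negbTE tj) /= => /andP [] .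
rewrite setD1U1 in Ht; last by rewrite eq_sym.
have h1 := Hloc t j tI jI.
have E : (t |: (J :\ j)) :\: I = (J :\: I) :\ j.
  apply/setP => u; rewrite !inE.
  case: (u =P t) => [->|ut] /=; first by rewrite tI /= !andbF.
  by rewrite andbCA.
have h2 : w I <= w (t |: (J :\ j)).
  apply: (IH #|(t |: (J :\ j)) :\: I|) => //.
  - rewrite E -Hd (cardsD1 j (J :\: I)) jE; lia.
  - rewrite cardsU1 -HS.
    have -> : (t \notin J :\ j) = true by rewrite !inE negb_and tJ orbT.
    by rewrite add1n.
clear -Ht HJI h1 h2; lra.
Qed.

Lemma inL_of (pi : {set 'I_n} -> R) (y : 'I_n -> R) :
  Sym3 k (piX pi y) ->
  (forall e, exists B : {set 'I_n}, [/\ #|B| = k, e \in B &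
      forall J : {set 'I_n}, #|J| = k -> piX pi y B <= piX pi y J]) ->
  inL k pi y.
Proof.
move=> Hw Hcov tau Htau.
have [x xt] : exists x, x \in tau by apply/card_gt0P; rewrite Htau.
have [i0 [i0t Hi0]] := @argmin_ex R _ (fun i => i \in tau)
  (fun i => pi (tau :\ i) + y i) x xt.
have [B [HB i0B Bmin]] := Hcov i0.
have HS : (#|B :\ i0|.+1 = k)%N by move: HB; rewrite (cardsD1 i0 B) i0B.
have Ha : i0 \in tau :\: (B :\ i0) by rewrite !inE eqxx.
have [t tE [ti Ht]] := GP Hw (erefl _) HS Htau Ha.
rewrite setD1K // in Ht.
have tB : t \notin B :\ i0 by move: tE; rewrite inE => /andP [].
have tt : t \in tau by move: tE; rewrite inE => /andP [].
have h1 : piX pi y B <= piX pi y (t |: (B :\ i0)).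
  by apply: Bmin; rewrite cardsU1 tB -HS add1n.
have e1 := sumD1 y tt.
have e2 := sumD1 y i0t.
have ht : pi (tau :\ t) + y t <= pi (tau :\ i0) + y i0.
  move: Ht h1; rewrite /piX => Ht h1.
  clear -Ht h1 e1 e2; lra.
exists i0, t; split => //; first by rewrite eq_sym.
move=> l lt; apply: le_trans ht _; exact: Hi0.
Qed.

End Aux2.



Section Constr.
Variable R : realType.
Variables k n : nat.
Variable pi : {set 'I_n} -> R.
Variable I : {set 'I_n}.
Hypothesis HI : #|I| = k.
Hypothesis k0 : (0 < k)%N.
Hypothesis kn : (k < n)%N.

Definition cc (i j : 'I_n) := pi (j |: (I :\ i)) - pi I.
Definition inP (y : 'I_n -> R) := forall i j, i \in I -> j \notin I -> y j - y i <= cc i j.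
Definition tight (y : 'I_n -> R) i j := [&& i \in I, j \notin I & y j - y i == cc i j].
Definition Ntight y := #|[set p : 'I_n * 'I_n | tight y p.1 p.2]|.
Definition cclosed y (C : {set 'I_n}) := forall i j, tight y i j -> (i \in C) = (j \in C).
Definition cconn y := forall C, cclosed y C -> C = set0 \/ C = setT.

Lemma move_step y C i1 j1 : inP y -> cclosed y C -> i1 \in I -> i1 \notin C ->
  j1 \notin I -> j1 \in C -> exists y', inP y' /\ (Ntight y < Ntight y')%N.
Proof.
move=> Py Cl i1I i1C j1I j1C.
pose D := fun p : 'I_n * 'I_n => [&& p.1 \in I, p.2 \notin I, p.1 \notin C & p.2 \in C].
pose slack := fun p : 'I_n * 'I_n => cc p.1 p.2 - (y p.2 - y p.1).
have D1 : D (i1, j1) by rewrite /D /= i1I j1I i1C j1C.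
have [p [Dp Hp]] := @argmin_ex R _ D slack _ D1.
move: (Dp); rewrite /D => /and4P [p1I p2I p1C p2C].
have t0 : 0 <= slack p by have := Py _ _ p1I p2I; rewrite /slack; lra.
exists (fun x => y x + (if x \in C then slack p else 0)); split.
- move=> i j iI jI; have := Py i j iI jI.
  case iC: (i \in C); case jC: (j \in C) => /= h; try lra.
  have : D (i, j) by rewrite /D /= iI jI iC jC.
  move/Hp; rewrite /slack /=; lra.
- apply: proper_card; apply/properP; split.
  + apply/subsetP => q; rewrite !inE /tight => /and3P [q1 q2 /eqP q3].
    have e : (q.1 \in C) = (q.2 \in C) by apply: Cl; rewrite /tight q1 q2 q3 eqxx.
    rewrite q1 q2 /= e; apply/eqP; rewrite -q3.
    case: (q.2 \in C); lra.
  + exists p; rewrite !inE /tight p1I p2I /=.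
    * rewrite (negbTE p1C) p2C; apply/eqP; rewrite /slack; lra.
    * apply/negP => /eqP h.
      have : (p.1 \in C) = (p.2 \in C) by apply: Cl; rewrite /tight p1I p2I h eqxx.
      by rewrite (negbTE p1C) p2C.
Qed.

Lemma closedC y C : cclosed y C -> cclosed y (~: C).
Proof. by move=> Cl i j h; rewrite !inE (Cl i j h). Qed.

Lemma exists_notin (C : {set 'I_n}) : C != setT -> exists x, x \notin C.
Proof.
move=> CT; apply: NNPP => h; move: CT; rewrite -[_ != _]/(~~ _); apply/negP/negPn/eqP.
apply/setP => x; rewrite inE; apply/negPn/negP => xn; apply: h; by exists x.
Qed.

Lemma I_in : exists i0, i0 \in I.
Proof. by apply/card_gt0P; rewrite HI. Qed.

Lemma I_notin : exists j0, j0 \notin I.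
Proof.
apply: exists_notin; apply/negP => /eqP e.
by move: HI; rewrite e cardsT card_ord => h; move: kn; rewrite h ltnn.
Qed.

Lemma move_step2 y C : inP y -> cclosed y C -> C != set0 -> C != setT ->
  exists y', inP y' /\ (Ntight y < Ntight y')%N.
Proof.
move=> Py Cl C0 CT.
have [c0 c0C] := set0Pn _ C0.
have [c1 c1C] := exists_notin CT.
have [i0 i0I] := I_in.
have [j0 j0I] := I_notin.
have ClC := closedC Cl.
have A : forall i j, i \in I -> i \notin C -> j \notin I -> j \in C ->
    exists y', inP y' /\ (Ntight y < Ntight y')%N.
  by move=> i j iI iC jI jC; apply: (move_step (C := C) (i1 := i) (j1 := j)).
have B : forall i j, i \in I -> i \in C -> j \notin I -> j \notin C ->
    exists y', inP y' /\ (Ntight y < Ntight y')%N.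
  move=> i j iI iC jI jC; apply: (move_step (C := ~: C) (i1 := i) (j1 := j)) => //;
  by rewrite inE ?iC ?jC.
case i0C: (i0 \in C).
- case: (boolP (c1 \in I)) => c1I.
  + case j0C: (j0 \in C).
    * exact: (A c1 j0).
    * by apply: (B i0 j0); rewrite ?j0C.
  + by apply: (B i0 c1).
- case: (boolP (c0 \in I)) => c0I.
  + case j0C: (j0 \in C).
    * by apply: (A i0 j0); rewrite ?i0C.
    * by apply: (B c0 j0); rewrite ?j0C.
  + by apply: (A i0 c0); rewrite ?i0C.
Qed.

Lemma Ntight_le y : (Ntight y <= n * n)%N.
Proof. by rewrite /Ntight (leq_trans (max_card _)) // card_prod card_ord. Qed.

Lemma exists_conn m : forall y, inP y -> (n * n - Ntight y <= m)%N ->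
  exists y', inP y' /\ cconn y'.
Proof.
elim: m => [|m IH] y Py Hm; (case: (classic (cconn y)) => [Hc|Hc]; first by exists y).
all: have [C HC] : exists C, ~ (cclosed y C -> C = set0 \/ C = setT)
       by apply: not_all_ex_not.
all: have Cl : cclosed y C by apply: NNPP => h; apply: HC => /h.
all: have C0 : C != set0 by apply/eqP => e; apply: HC => _; left.
all: have CT : C != setT by apply/eqP => e; apply: HC => _; right.
all: have [y' [Py' lt]] := move_step2 Py Cl C0 CT.
all: have le := Ntight_le y'.
- by move: Hm lt le; clear; lia.
- apply: (IH y' Py'); by move: Hm lt le; clear; lia.
Qed.

Lemma init_inP : exists y, inP y.
Proof.
pose K := \sum_(p : 'I_n * 'I_n) `|cc p.1 p.2|.
exists (fun x => if x \in I then K else 0) => i j iI jI.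
rewrite iI (negbTE jI).
have h : `|cc i j| <= K.
  rewrite /K (bigD1 (i, j)) //=; apply: ler_wpDr; last exact: lexx.
  by apply: sumr_ge0 => q _; exact: normr_ge0.
have h2 := ler_norm (- cc i j); rewrite normrN in h2.
lra.
Qed.

Lemma exists_good : exists y, inP y /\ cconn y.
Proof.
have [y Py] := init_inP.
exact: (@exists_conn (n * n - Ntight y) y Py (leqnn _)).
Qed.

End Constr.



Section Final.
Variable R : realType.
Variables k n : nat.
Variable pi : {set 'I_n} -> R.

Lemma inMat x (J : {set 'I_n}) :
  reflect (#|J| = k /\ forall J' : {set 'I_n}, #|J'| = k -> piX pi x J <= piX pi x J')
          (J \in Mat k pi x).
Proof.
rewrite inE; apply: (iffP andP) => [[/eqP h /forallP H]|[h H]]; split => //.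
- by move=> J' hJ'; move: (H J'); rewrite hJ' eqxx.
- by rewrite h.
- by apply/forallP => J'; apply/implyP => /eqP; exact: H.
Qed.

Variable I : {set 'I_n}.
Hypothesis HI : #|I| = k.
Hypothesis k0 : (0 < k)%N.
Hypothesis kn : (k < n)%N.
Hypothesis D : Dressian k pi.

Lemma main_exists : exists y yt : 'I_n -> R,
  [/\ is_vertex_B k pi y, is_lift k pi y yt & piX pi yt I = 0].
Proof.
have [y [Py Cy]] := @exists_good R k n pi I HI k0 kn.
have S3 : Sym3 k (piX pi y) := Sym3_shift y (Dressian_Sym3 D).
have cardB : forall i j, i \in I -> j \notin I -> #|j |: (I :\ i)| = k.
  move=> i j iI jI; rewrite cardsU1 -HI (cardsD1 i I) iI.
  by rewrite !inE negb_and jI orbT.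
have loc : forall i j, i \in I -> j \notin I ->
    piX pi y I <= piX pi y (j |: (I :\ i)).
  move=> i j iI jI; rewrite /piX (sumD1 y iI) sumU1; last by rewrite !inE negb_and jI orbT.
  by have := Py i j iI jI; rewrite /cc; lra.
have glob := loc_glob S3 HI loc.
have teq : forall i j, tight pi I y i j -> piX pi y (j |: (I :\ i)) = piX pi y I.
  move=> i j /and3P [iI jI /eqP h].
  rewrite /piX (sumD1 y iI) sumU1; last by rewrite !inE negb_and jI orbT.
  by move: h; rewrite /cc => h; lra.
have [i0 i0I] := @I_in k n I HI k0.
have cover : forall e, exists B : {set 'I_n}, [/\ #|B| = k, e \in B &
      forall J : {set 'I_n}, #|J| = k -> piX pi y B <= piX pi y J].
  move=> e; case eI: (e \in I); first by exists I; split.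
  have [i ti] : exists i, tight pi I y i e.
    apply: NNPP => h.
    have cl : cclosed pi I y [set e].
      move=> i j tij; move: (tij) => /and3P [iI jI _]; rewrite !inE.
      have -> : (i == e) = false.
        by apply/negbTE; apply/eqP => ie; move: eI; rewrite -ie iI.
      case: (j =P e) => // je; exfalso; apply: h; exists i; by rewrite -je.
    case: (Cy _ cl) => h'.
    - by move: (set11 e); rewrite h' inE.
    - have : i0 \in [set e] by rewrite h' inE.
      by rewrite inE => /eqP ie; move: eI; rewrite -ie i0I.
  move: (ti) => /and3P [iI eI' _].
  exists (e |: (I :\ i)); split; [exact: cardB | by rewrite setU11 |].
  by move=> J HJ; rewrite teq //; exact: glob.
have Ly : inL k pi y := inL_of S3 cover.
have IMy : I \in Mat k pi y by apply/inMat; split.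
have point : point_mod1 (face k pi y) y.
  move=> z [Lz Mz].
  have IMz : I \in Mat k pi z by rewrite Mz.
  have edge : forall i j, tight pi I y i j -> z j - y j = z i - y i.
    move=> i j tij; move: (tij) => /and3P [iI jI /eqP h].
    have BMy : j |: (I :\ i) \in Mat k pi y.
      by apply/inMat; split; [exact: cardB | move=> J HJ; rewrite teq //; exact: glob].
    move: BMy; rewrite -Mz => /inMat [_ H1].
    move: IMz => /inMat [_ H2].
    have h1 := H1 I HI; have h2 := H2 _ (cardB _ _ iI jI).
    move: h1 h2; rewrite /piX (sumD1 z iI) sumU1; last by rewrite !inE negb_and jI orbT.
    move: h; rewrite /cc => h h1 h2; lra.
  pose C := [set x | z x - y x == z i0 - y i0].
  have cl : cclosed pi I y C by move=> i j tij; rewrite !inE (edge i j tij).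
  case: (Cy _ cl) => h.
  - have : i0 \in C by rewrite !inE eqxx.
    by rewrite h inE.
  - exists (z i0 - y i0) => x.
    have : x \in C by rewrite h inE.
    by rewrite inE => /eqP hx; lra.
have bnd : bounded_mod1 (face k pi y).
  exists (\sum_(p : 'I_n * 'I_n) `|y p.1 - y p.2|) => z Fz i j.
  have [t Ht] := point z Fz.
  have -> : z i - z j = y i - y j by rewrite !Ht; ring.
  rewrite (bigD1 (i, j)) //=; apply: ler_wpDr; last exact: lexx.
  by apply: sumr_ge0 => q _; exact: normr_ge0.
pose t0 := piX pi y I / k%:R.
pose yt := fun x => y x + t0.
have shift : forall J : {set 'I_n}, #|J| = k -> piX pi yt J = piX pi y J - piX pi y I.
  move=> J HJ; rewrite /piX /yt big_split /= sumr_const HJ.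
  have -> : t0 *+ k = pi I - \sum_(i in I) y i.
    rewrite /t0 -mulr_natr divfK // pnatr_eq0 -lt0n //.
  by rewrite /piX; lra.
exists y, yt; split.
- by split.
- split.
  + by exists t0.
  + by exists I; split => //; rewrite shift // subrr.
  + by move=> J HJ; rewrite shift // subr_ge0; exact: glob.
- by rewrite shift // subrr.
Qed.

End Final.

Theorem proposition2p4 (R : realType) (k n : nat) (pi : {set 'I_n} -> R) :
  (0 < k < n)%N ->
  Dressian k pi ->
  forall I : {set 'I_n}, #|I| = k ->
    is_min (fun v : R => exists y yt : 'I_n -> R,
              [/\ is_vertex_B k pi y, is_lift k pi y yt &
                  v = \sum_(i in I) - yt i])
           (- pi I).
Proof.
move=> /andP [k0 kn] D I HI; split.
- have [y [yt [V L e]]] := main_exists HI k0 kn D.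
  exists y, yt; split => //.
  by move: e; rewrite /piX sumrN => e; lra.
- move=> v [y' [yt' [_ [_ _ Hl] ->]]].
  have := Hl I HI; rewrite /piX sumrN => h; lra.
Qed.
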